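(* Let $u$ be a one-sided Sturmian sequence and $(X_u^+,\sigma)$ its associated Sturmian system. In the HB diagram of $X_u^+$, for every $n\ge1$ there are exactly $n+1$ paths of length $n$ starting from either the vertex $0$ or the vertex $1$.
   Context: A sequence $u\in\{0,1\}^{\mathbb N}$ is Sturmian if for every $n\ge1$ exactly $n+1$ distinct blocks of length $n$ occur in $u$. $X_u^+$ is the closure of $\{\sigma^n u:n\in\mathbb N\}$, $\sigma$ the shift $(\sigma x)_i=x_{i+1}$, and $\tilde X_u=\{x\in\{0,1\}^{\mathbb Z}: x_px_{p+1}\dots\in X_u^+\ \forall p\}$ its natural extension. For a block $a_{-n}\dots a_0$ occurring in $\tilde X_u$, $\mathrm{fol}(a_{-n}\dots a_0)=\{b_0b_1\dots\in X_u^+:\exists b\in\tilde X_u,\ b_{-n}\dots b_0=a_{-n}\dots a_0\}$. A block $a_{-n}\dots a_0$ ($n\ge1$) is significant if $\mathrm{fol}(a_{-n}\dots a_0)\subsetneq\mathrm{fol}(a_{-n+1}\dots a_0)$; the blocks $0$ and $1$ are also significant. $\mathrm{sig}(\cdot)$ is the longest significant suffix. The HB diagram has vertex set the significant blocks and an arrow $\alpha\to\beta$ iff there is a symbol $b$ with $\alpha b$ occurring in $\tilde X_u$ and $\beta=\mathrm{sig}(\alpha b)$. The length of a path is its number of vertices. *)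

(* Defs.v *)
From mathcomp Require Import all_boot all_algebra.
Set Implicit Arguments. Unset Strict Implicit. Unset Printing Implicit Defensive.
Import GRing.Theory Num.Theory.
Local Open Scope ring_scope.

Definition has_card (T : eqType) (P : T -> Prop) (k : nat) : Prop :=
  exists s : seq T, [/\ uniq s, size s = k & forall x, x \in s <-> P x].

Definition block_at (x : nat -> bool) (i n : nat) : seq bool :=
  [seq x (i + k)%N | k <- iota 0 n].

Definition sturmian (u : nat -> bool) : Prop :=
  forall n : nat, (1 <= n)%N ->
    has_card (fun w : seq bool => size w = n /\ exists i, w = block_at u i n) n.+1.

Definition shiftn (n : nat) (x : nat -> bool) : nat -> bool := fun i => x (n + i)%N.

(* X_u^+ : closure of the orbit {sigma^n u} in the product topology of
   {0,1}^N (x is a limit of shifts of u iff every prefix of x is matched by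
   some shift of u). *)
Definition Xplus (u : nat -> bool) (x : nat -> bool) : Prop :=
  forall N : nat, exists n : nat, forall i : nat, (i < N)%N -> shiftn n u i = x i.

Definition Xtilde (u : nat -> bool) (x : int -> bool) : Prop :=
  forall p : int, Xplus u (fun i : nat => x (p + i%:Z)).

Definition occurs (u : nat -> bool) (w : seq bool) : Prop :=
  exists x : int -> bool, Xtilde u x /\
    exists p : int, forall k : nat, (k < size w)%N -> x (p + k%:Z) = nth false w k.

(* fol(a_(-n) ... a_0) for a block w = a_(-n) ... a_0 (so n = size w - 1):
   the y in X_u^+ such that some b in X~_u has b_(-n)..b_0 = w and
   b_0 b_1 ... = y. *)
Definition fol (u : nat -> bool) (w : seq bool) (y : nat -> bool) : Prop :=
  Xplus u y /\
  exists b : int -> bool, [/\ Xtilde u b,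
    (forall k : nat, (k < size w)%N -> b (k%:Z - (size w).-1%:Z) = nth false w k)
    & forall i : nat, b i%:Z = y i].

Definition significant (u : nat -> bool) (w : seq bool) : Prop :=
  (size w = 1%N) \/
  [/\ (2 <= size w)%N, occurs u w,
      (forall y, fol u w y -> fol u (behead w) y)
    & exists y, fol u (behead w) y /\ ~ fol u w y].

Definition is_sig (u : nat -> bool) (w beta : seq bool) : Prop :=
  [/\ suffix beta w, significant u beta
    & forall g : seq bool, suffix g w -> significant u g -> (size g <= size beta)%N].

Definition hb_arrow (u : nat -> bool) (alpha beta : seq bool) : Prop :=
  significant u alpha /\
  exists b : bool, occurs u (rcons alpha b) /\ is_sig u (rcons alpha b) beta.

(* a path in the HB diagram, given as its list of vertices
   (its length is the number of vertices) *)
Fixpoint hb_path_from (u : nat -> bool) (v : seq bool) (p : seq (seq bool)) : Prop :=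
  match p with
  | [::] => True
  | w :: p' => hb_arrow u v w /\ hb_path_from u w p'
  end.

Definition hb_path (u : nat -> bool) (p : seq (seq bool)) : Prop :=
  match p with
  | [::] => False
  | v :: p' => significant u v /\ hb_path_from u v p'
  end.

(* Main.v *)
Require Import Defs.
From mathcomp Require Import all_boot all_algebra.
From mathcomp Require Import zify ring.
From Stdlib Require Import Classical ClassicalEpsilon.
Set Implicit Arguments. Unset Strict Implicit. Unset Printing Implicit Defensive.
Import GRing.Theory Num.Theory.
Local Open Scope ring_scope.

Lemma size_block u i n : size (block_at u i n) = n.
Proof. by rewrite /block_at size_map size_iota. Qed.

Lemma nth_block u i n r : (r < n)%N -> nth false (block_at u i n) r = u (i + r)%N.
Proof. move=> h; rewrite /block_at (nth_map 0%N) ?size_iota // nth_iota // add0n. Qed.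

Lemma blockP u i n w : w = block_at u i n <->
  size w = n /\ forall r, (r < n)%N -> nth false w r = u (i + r)%N.
Proof.
split.
- move=> ->; split; [exact: size_block | exact: nth_block].
- case=> hs hn; apply: (@eq_from_nth _ false); rewrite ?size_block //.
  move=> r hr; rewrite -hs in hn *; rewrite nth_block // hn //.
Qed.

Lemma Xplus_ext u f g : Xplus u f -> f =1 g -> Xplus u g.
Proof. move=> h e N; case: (h N) => n hn; exists n => i hi; rewrite -e; exact: hn. Qed.

Lemma Xtilde_shift u x (c : int) : Xtilde u x -> Xtilde u (fun z => x (z + c)%R).
Proof.
move=> h p; apply: Xplus_ext (h (p + c)%R) _ => i /=.
by rewrite -!addrA [(c + _)%R]addrC.
Qed.

Lemma Xtilde_plus u x : Xtilde u x -> Xplus u (fun i : nat => x i%:Z).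
Proof. move=> h; apply: Xplus_ext (h 0%R) _ => i /=; by rewrite add0r. Qed.

Lemma occurs_fol u w : w <> [::] -> (occurs u w <-> exists y, fol u w y).
Proof.
move=> wn; split.
- case=> x [hx [p hp]].
  set c : int := (p + (size w).-1%:Z)%R.
  have hx' := Xtilde_shift c hx.
  exists (fun i : nat => x (i%:Z + c)%R); split; first exact: Xtilde_plus hx'.
  exists (fun z => x (z + c)%R); split => //.
  move=> k hk; rewrite -hp //; congr x; rewrite /c; ring.
- case=> y [_ [b [hb hk _]]]; exists b; split => //.
  exists (- (size w).-1%:Z)%R => k hk1; rewrite -hk //; congr b; ring.
Qed.

Lemma fol_rcons u a al b y : fol u (rcons (a :: al) b) y <->
  exists z, [/\ fol u (a :: al) z, z 1%N = b & forall i, z i.+1 = y i].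
Proof.
split.
- case=> hy [x [hx hk hxy]].
  rewrite size_rcons /= in hk.
  exists (fun i : nat => x (i%:Z - 1)%R); split.
  + split; first exact: Xtilde_plus (Xtilde_shift (-1) hx).
    exists (fun t => x (t - 1)%R); split => //; first exact: Xtilde_shift.
    move=> k hk1 /=.
    have := hk k (ltn_trans hk1 (ltnSn _)).
    rewrite -rcons_cons nth_rcons hk1 => <-; congr x; lia.
  + have := hk (size al).+1 (ltnSn _).
    rewrite -rcons_cons nth_rcons /= ltnn eqxx => <-; congr x; lia.
  + move=> i; rewrite -hxy; congr x; lia.
- case=> z [[hz [x [hx hk hxz]]] hz1 hzy].
  split.
  + apply: Xplus_ext (Xtilde_plus (Xtilde_shift 1 hx)) _ => i /=.
    rewrite -hzy -hxz; congr x; lia.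
  exists (fun t => x (t + 1)%R); split; first exact: Xtilde_shift.
  + rewrite size_rcons /= => k hk1.
    rewrite -rcons_cons nth_rcons /=.
    case: ltnP => h1.
    * rewrite -hk //; congr x; rewrite /=; lia.
    * have -> : k = (size al).+1 by lia.
      rewrite eqxx -hz1 -hxz; congr x; lia.
  + move=> i; rewrite -hzy -hxz; congr x; lia.
Qed.

Lemma fol_behead u w y : (2 <= size w)%N -> fol u w y -> fol u (behead w) y.
Proof.
case: w => [|a [|c w]] //= _ [hy [x [hx hk hxy]]].
split => //; exists x; split => //= k hk1.
have := hk k.+1 hk1; rewrite /= => <-; congr x; lia.
Qed.

Lemma occurs_sub u w g d : occurs u w -> (d + size g <= size w)%N ->
  (forall k, (k < size g)%N -> nth false g k = nth false w (d + k)) -> occurs u g.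
Proof.
move=> [x [hx [p hp]]] hs hg; exists x; split => //; exists (p + d%:Z)%R => k hk.
rewrite hg // -hp; last by lia.
congr x; lia.
Qed.

Lemma occurs_suffix u w g : occurs u w -> suffix g w -> occurs u g.
Proof.
move=> h /suffixP [t e]; rewrite e in h.
apply: (@occurs_sub _ _ _ (size t) h); first by rewrite size_cat.
by move=> k hk; rewrite nth_cat ltnNge leq_addr /= addKn.
Qed.

Lemma occurs_rcons u w b : occurs u (rcons w b) -> occurs u w.
Proof.
move=> h; apply: (@occurs_sub _ _ _ 0%N h); first by rewrite size_rcons add0n.
by move=> k hk; rewrite nth_rcons hk.
Qed.

Definition fac u w := exists i, w = block_at u i (size w).

Lemma occurs_fac u w : occurs u w -> fac u w.
Proof.
case=> x [hx [p hp]].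
case: (hx p (size w)) => n hn.
exists n; apply/blockP; split => // r hr.
rewrite -hp // -(hn r hr) /shiftn //.
Qed.

Lemma rcons_nn (T : Type) (s : seq T) x : rcons s x <> [::].
Proof. by case: s. Qed.

Lemma cons_nn (T : Type) (x : T) s : x :: s <> [::].
Proof. by []. Qed.

Definition feq u v w := forall y, fol u v y <-> fol u w y.

Lemma occurs_transfer u v w b : v <> [::] -> w <> [::] -> feq u v w ->
  occurs u (rcons v b) -> occurs u (rcons w b).
Proof.
case: v => [|a v] // _; case: w => [|c w] // _ he.
move/occurs_fol => /(_ (@rcons_nn _ _ _)) [y /fol_rcons [z [hz hz1 hzy]]].
apply/occurs_fol; first exact: rcons_nn.
exists y; apply/fol_rcons; exists z; split => //; exact/he.
Qed.

Lemma feq_rcons u v w b : v <> [::] -> w <> [::] -> feq u v w ->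
  feq u (rcons v b) (rcons w b).
Proof.
case: v => [|a v] // _; case: w => [|c w] // _ he y.
split => /fol_rcons [z [hz hz1 hzy]]; apply/fol_rcons; exists z; split => //; exact/he.
Qed.

Lemma suffix_size_eq (g h w : seq bool) : suffix g w -> suffix h w -> size g = size h -> g = h.
Proof.
move=> s1 s2 e; move: s1 s2; rewrite !suffixE e => /eqP e1 /eqP e2.
by rewrite -e1.
Qed.

Lemma suffix_le (g h w : seq bool) : suffix g w -> suffix h w -> (size g <= size h)%N -> suffix g h.
Proof.
move=> sg sh le.
have lh := size_suffix sh.
move: sg sh; rewrite !suffixE => /eqP <- /eqP <-.
rewrite size_drop drop_drop; apply/eqP; congr drop; rewrite size_drop; move: le lh; set a := size w; set b := size h; set c := size g; move=> le lh. lia.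
Qed.

Lemma significant_nil u : ~ significant u [::].
Proof. by case=> // -[]. Qed.

Lemma is_sig_nonnil u w b : is_sig u w b -> b <> [::].
Proof. by case=> _ h _ e; rewrite e in h; apply: significant_nil h. Qed.

Lemma sig_ex u w : w <> [::] -> exists beta, is_sig u w beta.
Proof.
move=> wn.
have hw : (1 <= size w)%N by case: w wn.
pose P k := significant u (drop (size w - k) w).
have key : forall B, (1 <= B <= size w)%N -> exists k,
    [/\ (1 <= k <= B)%N, P k & forall k', (k' <= B)%N -> P k' -> (k' <= k)%N].
  elim=> [|B IH] //= hB.
  case: (posnP B) => [B0|Bp].
  - subst B; exists 1%N; split => //.
      by left; rewrite size_drop; lia.
  - have hB' : (1 <= B <= size w)%N by apply/andP; split; [exact: Bp | exact: ltnW].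
    case: (IH hB') => k [hk1 hk2 hk3].
    case: (classic (P B.+1)) => hP.
    + exists B.+1; split => //; lia.
    + exists k; split => //; first lia.
      move=> k' hk' hP'; case: (ltnP k' B.+1) => h; first by apply: hk3.
      have e : k' = B.+1 by lia.
      by rewrite e in hP'.
have hw2 : (1 <= size w <= size w)%N by rewrite hw leqnn.
have [k [hk1 hk2 hk3]] := key (size w) hw2.
exists (drop (size w - k) w); split => //; first exact: suffix_drop.
move=> g sg hg; rewrite size_drop.
have hs := size_suffix sg.
have -> : (size w - (size w - k) = k)%N by lia.
apply: hk3 => //; rewrite /P.
move: sg; rewrite suffixE => /eqP ->; done.
Qed.

Lemma is_sig_uniq u w b1 b2 : is_sig u w b1 -> is_sig u w b2 -> b1 = b2.
Proof.
case=> s1 g1 m1 [s2 g2 m2].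
have e : size b1 = size b2.
  by apply/eqP; rewrite eqn_leq; apply/andP; split; [exact: (m2 _ s1 g1) | exact: (m1 _ s2 g2)].
exact: suffix_size_eq s1 s2 e.
Qed.

Lemma is_sig1 u a : is_sig u [:: a] [:: a].
Proof.
split => //; first exact: suffix_refl; first by left.
by move=> g /size_suffix.
Qed.

Lemma fol_sig u w beta : occurs u w -> is_sig u w beta ->
  forall g, suffix g w -> (size beta <= size g)%N -> feq u g beta.
Proof.
move=> ow hsig.
have bn := is_sig_nonnil hsig.
case: hsig => sb gb mb.
have hb1 : (1 <= size beta)%N by case: (beta) bn.
move=> g; move: {2}(size g) (erefl (size g)) => n; elim: n g => [|n IH] g hn sg hle.
  by lia.
case: (eqVneq (size g) (size beta)) => [e|ne].
  by rewrite (suffix_size_eq sg sb e).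
have hgt : (size beta < size g)%N by lia.
have sbg : suffix (behead g) w.
  by apply: suffix_trans sg; rewrite -drop1; apply: suffix_drop.
have e1 : size (behead g) = n by rewrite size_behead hn.
have e2 : (size beta <= size (behead g))%N by rewrite size_behead; lia.
have IH' := IH (behead g) e1 sbg e2.
have ns : ~ significant u g.
  by move=> sgf; have := mb g sg sgf; rewrite leqNgt hgt.
have h2 : (2 <= size g)%N by exact: leq_ltn_trans hb1 hgt.
have og : occurs u g by apply: occurs_suffix ow sg.
move=> y; rewrite -IH'; split; first exact: fol_behead.
move=> hy; apply: NNPP => hny; apply: ns; right; split => //.
- by move=> z; apply: fol_behead.
- by exists y.
Qed.

Lemma sig_step u w v b beta : occurs u (rcons w b) -> is_sig u w v ->
  is_sig u (rcons w b) beta -> is_sig u (rcons v b) beta.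
Proof.
move=> ow hv hb.
have ow' := occurs_rcons ow.
have vn := is_sig_nonnil hv.
have betan := is_sig_nonnil hb.
have hv' := hv; case: hv' => sv gv mv.
have hb' := hb; case: hb' => sbeta gbeta mbeta.
have hv1 : (1 <= size v)%N by case: (v) vn.
case/lastP: beta betan hb sbeta gbeta mbeta => [//|g c] _ hb sbeta gbeta mbeta.
move: sbeta; rewrite suffix_rcons => /andP [/eqP ec sg]; subst c.
have le : (size g <= size v)%N.
  apply: contraT; rewrite -ltnNge => lt.
  have f1 := fol_sig ow' hv sg (ltnW lt).
  have sbg : suffix (behead g) w.
    by apply: suffix_trans sg; rewrite -drop1; apply: suffix_drop.
  have e2 : (size v <= size (behead g))%N by rewrite size_behead; lia.
  have f2 := fol_sig ow' hv sbg e2.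
  have fe : feq u g (behead g) by move=> y; rewrite f1 f2.
  have [a [a' [g'' eg]]] : exists a a' g'', g = a :: a' :: g''.
    case: (g) lt => [|a [|a' g'']] /=; [by [] | by rewrite ltnS leqn0 => /eqP e; rewrite e in hv1 | by exists a, a', g''].
  rewrite eg /= in fe.
  have fe' := feq_rcons b (@cons_nn _ _ _) (@cons_nn _ _ _) fe.
  rewrite eg in gbeta.
  case: gbeta => [|[_ _ _ [y [hy1 hy2]]]]; first by rewrite size_rcons.
  by exfalso; apply: hy2; apply/fe'; exact: hy1.
split.
- by rewrite suffix_rcons eqxx /=; apply: suffix_le sg sv le.
- exact: gbeta.
- move=> g' sg' hg'; apply: mbeta => //; apply: suffix_trans sg' _.
  by rewrite suffix_rcons eqxx.
Qed.


Lemma sturm_list u n : sturmian u -> (1 <= n)%N -> exists s : seq (seq bool),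
  [/\ uniq s, size s = n.+1 &
     forall x, x \in s <-> (size x = n /\ exists i, x = block_at u i n)].
Proof. by move=> h hn; case: (h n hn) => s [? ? ?]; exists s. Qed.

Lemma block_mem u n (s : seq (seq bool)) i : (forall x, x \in s <-> (size x = n /\ exists i, x = block_at u i n)) ->
  block_at u i n \in s.
Proof. move=> h; apply/h; split; [exact: size_block | by exists i]. Qed.

Lemma period_bound u i j : (i < j)%N -> (forall t, u (i + t)%N = u (j + t)%N) ->
  forall L q, exists q', (q' < j)%N /\ block_at u q L = block_at u q' L.
Proof.
move=> lij hp L q; elim: q {-2}q (leqnn q) => [|Q IH] q hq.
  by exists q; split => //; lia.
case: (ltnP q j) => hqj; first by exists q.
have [q' [h1 h2]] : exists q', (q' < j)%N /\ block_at u (q - (j - i)) L = block_at u q' L.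
  by apply: IH; lia.
exists q'; split => //; rewrite -h2; apply/blockP; split; first exact: size_block.
move=> r hr; rewrite nth_block //.
have := hp (q - j + r)%N.
have -> : (i + (q - j + r) = q - (j - i) + r)%N by lia.
have -> : (j + (q - j + r) = q + r)%N by lia.
by move=> ->.
Qed.

Lemma not_evper u i j : sturmian u -> (i < j)%N -> ~ (forall t, u (i + t)%N = u (j + t)%N).
Proof.
move=> hs lij hp.
have [s [us ss hsm]] := sturm_list hs (leq_ltn_trans (leq0n i) lij).
have sub : {subset s <= [seq block_at u q j | q <- iota 0 j]}.
  move=> x /hsm [_ [q ->]].
  have [q' [h1 ->]] := period_bound lij hp j q.
  by apply/mapP; exists q' => //; rewrite mem_iota.
have := uniq_leq_size us sub; rewrite size_map size_iota ss; lia.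
Qed.

Definition Ue u k := forall q1 q2, block_at u q1.+1 k = block_at u q2.+1 k ->
  u (q1.+1 + k)%N = u (q2.+1 + k)%N.

Lemma Ue_false u k : sturmian u -> (1 <= k)%N -> Ue u k -> False.
Proof.
move=> hs hk hU.
have [s [us ss hsm]] := sturm_list hs hk.
pose ps := [seq block_at u q.+1 k | q <- iota 0 k.+2].
have sub : {subset ps <= s}.
  by move=> x /mapP [q _ ->]; apply: block_mem hsm.
have nu : ~~ uniq ps.
  apply/negP => up; have := uniq_leq_size up sub.
  by rewrite size_map size_iota ss ltnn.
case/(uniqPn [::]): nu => i [j [lij ljs]].
rewrite size_map size_iota in ljs.
rewrite !(nth_map 0%N) ?size_iota ?nth_iota //; try lia.
rewrite !add0n => eb.
have per : forall t, block_at u (i.+1 + t) k = block_at u (j.+1 + t) k.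
  elim=> [|t IH]; first by rewrite !addn0.
  have hU' := hU (i + t)%N (j + t)%N.
  rewrite -!addSn in hU'; have {}hU' := hU' IH.
  apply/blockP; split; first exact: size_block.
  move=> r hr; rewrite nth_block //.
  case: (ltnP r.+1 k) => hrk.
  - have := congr1 (nth false ^~ r.+1) IH.
    rewrite !nth_block //.
    have -> : (i.+1 + t + r.+1 = i.+1 + t.+1 + r)%N by lia.
    by have -> : (j.+1 + t + r.+1 = j.+1 + t.+1 + r)%N by lia.
  - have -> : (i.+1 + t.+1 + r = i.+1 + t + k)%N by lia.
    by have -> : (j.+1 + t.+1 + r = j.+1 + t + k)%N by lia.
apply: (@not_evper u i.+1 j.+1 hs) => //.
move=> t; have := congr1 (nth false ^~ 0%N) (per t).
by rewrite !nth_block // !addn0.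
Qed.

Lemma map_uniq_inj (T1 T2 : eqType) (f : T1 -> T2) (t : seq T1) x y :
  uniq (map f t) -> x \in t -> y \in t -> f x = f y -> x = y.
Proof.
elim: t => [//|z t IH] /= /andP [nz ut].
rewrite !inE => /orP [/eqP ->|hx] /orP [/eqP ->|hy] // e.
- by move: nz; rewrite e (map_f f hy).
- by move: nz; rewrite -e (map_f f hx).
- exact: IH.
Qed.

Lemma take_block u q k n : (k <= n)%N -> take k (block_at u q n) = block_at u q k.
Proof.
move=> hk; apply/blockP; split; first by rewrite size_takel // size_block.
move=> r hr; rewrite nth_take // nth_block //; lia.
Qed.

Lemma ext_list u k (s : seq (seq bool)) : uniq s ->
  (forall x, x \in s -> exists q, x = block_at u q.+1 k) ->
  exists t : seq (seq bool), [/\ uniq t, size t = size s,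
    forall x, x \in t -> exists q, x = block_at u q.+1 k.+1 & map (take k) t = s].
Proof.
elim: s => [|w s IH] /=.
  by move=> _ _; exists [::].
move=> /andP [nw us] hs.
have [t [ut st ht mt]] : exists t : seq (seq bool), [/\ uniq t, size t = size s,
    forall x, x \in t -> exists q, x = block_at u q.+1 k.+1 & map (take k) t = s].
  by apply: IH => // x hx; apply: hs; rewrite inE hx orbT.
have [q eq] := hs w (mem_head _ _).
exists (block_at u q.+1 k.+1 :: t); split => /=.
- rewrite ut andbT; apply/negP => hin.
  move: nw; rewrite -mt eq -(take_block u q.+1 (leqnSn k)).
  by rewrite (map_f (take k) hin).
- by rewrite st.
- move=> x; rewrite inE => /orP [/eqP ->|hx]; [by exists q | exact: ht].
- by rewrite mt take_block // eq.
Qed.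

Lemma fail_ex u k : ~ Ue u k -> exists q1 q2, block_at u q1.+1 k = block_at u q2.+1 k /\
    u (q1.+1 + k)%N <> u (q2.+1 + k)%N.
Proof.
move=> hU; apply: NNPP => hn; apply: hU => q1 q2 e; apply: NNPP => ne; apply: hn.
by exists q1, q2.
Qed.

Lemma chain u k : (1 <= k)%N -> (exists k', (1 <= k' <= k)%N /\ Ue u k') \/
  exists s : seq (seq bool), [/\ uniq s, size s = k.+1 &
     forall x, x \in s -> exists q, x = block_at u q.+1 k].
Proof.
elim: k => [//|k IH] _.
case: (posnP k) => k0.
- subst k.
  case: (classic (Ue u 1)) => hU; first by left; exists 1%N.
  have [q1 [q2 [eb ne]]] := fail_ex hU.
  right; exists [:: block_at u q1.+2 1; block_at u q2.+2 1]; split => //.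
  + rewrite /= inE andbT /block_at /=; apply/negP => /eqP [e].
    apply: ne; have -> : (q1.+1 + 1 = q1.+2 + 0)%N by lia.
    by have -> : (q2.+1 + 1 = q2.+2 + 0)%N by lia.
  + move=> x; rewrite !inE => /orP [/eqP ->|/eqP ->]; [by exists q1.+1 | by exists q2.+1].
- case: (IH k0) => [[k' [hk' hUk]]|[s [us ss hs]]].
    by left; exists k'; split => //; lia.
  case: (classic (Ue u k)) => hU.
    by left; exists k; split => //; lia.
  have [q1 [q2 [eb ne]]] := fail_ex hU.
  have [t [ut st ht mt]] := ext_list us hs.
  set a := block_at u q1.+1 k.+1; set b := block_at u q2.+1 k.+1.
  have ta : take k a = block_at u q1.+1 k by rewrite take_block.
  have tb : take k b = block_at u q2.+1 k by rewrite take_block.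
  have nab : a != b.
    apply/eqP => e; apply: ne; have := congr1 (nth false ^~ k) e.
    by rewrite !nth_block.
  have ha : exists q, a = block_at u q.+1 k.+1 by exists q1.
  have hb : exists q, b = block_at u q.+1 k.+1 by exists q2.
  right.
  case ina : (a \in t).
  + case inb : (b \in t).
    * have ut' : uniq (map (take k) t) by rewrite mt.
      have := map_uniq_inj ut' ina inb; rewrite ta tb eb => /(_ erefl) e.
      by rewrite e eqxx in nab.
    * exists (b :: t); split => /=; [by rewrite inb ut | by rewrite st ss |].
      by move=> x; rewrite inE => /orP [/eqP ->|hx]; [exact: hb | exact: ht].
  + exists (a :: t); split => /=; [by rewrite ina ut | by rewrite st ss |].
    by move=> x; rewrite inE => /orP [/eqP ->|hx]; [exact: ha | exact: ht].
Qed.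

Lemma REC u : sturmian u -> forall i m, exists j, (1 <= j)%N /\ block_at u j m = block_at u i m.
Proof.
move=> hs i m; apply: NNPP => H.
have H' : forall j, (1 <= j)%N -> block_at u j m <> block_at u i m.
  by move=> j hj e; apply: H; exists j.
have i0 : i = 0%N.
  by case: (posnP i) => // ip; case: (H' i ip erefl).
have m1 : (1 <= m)%N.
  by case: (posnP m) => // m0; subst m; case: (H' 1%N erefl).
case: (chain u m1) => [[k' [hk' hU]]|[s [us ss hsx]]].
  by apply: (@Ue_false u k' hs) => //; case/andP: hk'.
have [su [usu ssu hsu]] := sturm_list hs m1.
set W := block_at u i m.
have Win : W \in su by apply: block_mem hsu.
have sub : {subset s <= rem W su}.
  move=> x hx; rewrite (mem_rem_uniq _ usu) inE.
  have [q eq] := hsx x hx.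
  apply/andP; split.
  - by apply/eqP; rewrite eq; apply: H'.
  - by rewrite eq; apply: block_mem hsu.
have := uniq_leq_size us sub; rewrite size_rem // ss ssu /=; lia.
Qed.


Lemma ext_exists u : sturmian u -> forall W : seq bool, exists W' : seq bool,
  fac u W -> fac u W' /\ exists a b, W' = a :: rcons W b.
Proof.
move=> hs W; case: (classic (fac u W)) => hf; last by exists W.
case: hf => i ei.
set m := size W in ei.
have [j [hj ej]] := REC hs i m.
rewrite -ei in ej.
exists (block_at u j.-1 m.+2) => _; split; first by exists j.-1; rewrite size_block.
exists (u j.-1), (u (j + m)%N); apply/esym/blockP; split; first by rewrite /= size_rcons.
case=> [|r] hr /=; first by rewrite addn0.
rewrite nth_rcons; case: ltnP => h1.
- rewrite -ej nth_block //; congr u; lia.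
- have -> : r = m by lia.
  rewrite eqxx; congr u; lia.
Qed.

Definition extw u (hs : sturmian u) (W : seq bool) : seq bool :=
  proj1_sig (constructive_indefinite_description _ (ext_exists hs W)).

Lemma extw_spec u (hs : sturmian u) W : fac u W ->
  fac u (extw hs W) /\ exists a b, extw hs W = a :: rcons W b.
Proof. rewrite /extw; case: constructive_indefinite_description => /= W' h; exact: h. Qed.

Definition Wk u (hs : sturmian u) w k := iter k (extw hs) w.

Lemma Wk_fac u (hs : sturmian u) w : fac u w -> forall k, fac u (Wk hs w k).
Proof. move=> hw; elim=> [//|k IH] /=; exact: (extw_spec hs IH).1. Qed.

Lemma Wk_step u (hs : sturmian u) w : fac u w -> forall k,
  exists a b, Wk hs w k.+1 = a :: rcons (Wk hs w k) b.
Proof. move=> hw k; exact: (extw_spec hs (Wk_fac hs hw k)).2. Qed.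

Lemma Wk_size u (hs : sturmian u) w : fac u w -> forall k,
  size (Wk hs w k) = (size w + k + k)%N.
Proof.
move=> hw; elim=> [|k IH]; first by rewrite !addn0.
have [a [b ->]] := Wk_step hs hw k.
rewrite /= size_rcons IH; lia.
Qed.

Lemma Wk_shift u (hs : sturmian u) w : fac u w -> forall a d r,
  (r < size (Wk hs w a))%N ->
  nth false (Wk hs w (a + d)) (r + d) = nth false (Wk hs w a) r.
Proof.
move=> hw a; elim=> [|d IH] r hr; first by rewrite !addn0.
rewrite !addnS; have [c [e ->]] := Wk_step hs hw (a + d).
rewrite /= nth_rcons.
have -> : (r + d < size (Wk hs w (a + d)))%N.
  by move: hr; rewrite !Wk_size //; lia.
exact: IH.
Qed.

Definition xz u (hs : sturmian u) w (z : int) : bool :=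
  match z with
  | Posz n => nth false (Wk hs w n) (n + n)
  | Negz n => nth false (Wk hs w n.+1) 0
  end.

Lemma xW u (hs : sturmian u) w : fac u w -> (1 <= size w)%N ->
  forall k r, (r < size (Wk hs w k))%N -> xz hs w (r%:Z - k%:Z) = nth false (Wk hs w k) r.
Proof.
move=> hw hw1 k r hr.
have hr' := hr; rewrite Wk_size // in hr'.
case: (leqP k r) => hkr.
- rewrite subzn //=.
  case: (leqP k (r - k)) => h2.
  + have := @Wk_shift _ hs _ hw k (r - k - k) r hr.
    have -> : (k + (r - k - k) = r - k)%N by lia.
    by have -> : (r + (r - k - k) = r - k + (r - k))%N by lia.
  + have h3 : ((r - k) + (r - k) < size (Wk hs w (r - k)))%N by rewrite Wk_size //; lia.
    have := @Wk_shift _ hs _ hw (r - k) (k - (r - k)) _ h3.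
    have -> : (r - k + (k - (r - k)) = k)%N by lia.
    by have -> : (r - k + (r - k) + (k - (r - k)) = r)%N by lia.
- have -> : r%:Z - k%:Z = Negz (k - r).-1 by rewrite NegzE; lia.
  change (nth false (Wk hs w (k - r).-1.+1) 0 = nth false (Wk hs w k) r).
  rewrite prednK; last by lia.
  have h3 : (0 < size (Wk hs w (k - r)))%N by rewrite Wk_size //; lia.
  have := @Wk_shift _ hs _ hw (k - r) r _ h3.
  by rewrite add0n subnK //; last by lia.
Qed.

Lemma fac_occurs u : sturmian u -> forall w, w <> [::] -> fac u w -> occurs u w.
Proof.
move=> hs w wn hw.
have hw1 : (1 <= size w)%N by case: (w) wn.
exists (xz hs w); split.
- move=> p N.
  pose k := (absz p + N)%N.
  have [j ej] := Wk_fac hs hw k.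
  pose c := absz (p + k%:Z).
  have hc : c%:Z = p + k%:Z by rewrite /c /k; lia.
  exists (j + c)%N => i hi.
  have hr : (c + i < size (Wk hs w k))%N by rewrite Wk_size // /c /k; lia.
  have e : p + i%:Z = (c + i)%N%:Z - k%:Z by rewrite PoszD hc; ring.
  rewrite /shiftn e xW // ej nth_block -?ej // addnA //.
- exists 0 => k hk.
  have hk' : (k < size (Wk hs w 0))%N by [].
  by rewrite add0r -(subr0 k%:Z) (@xW _ hs _ hw hw1 0%N k hk').
Qed.


Lemma sig_ex' u (w : seq bool) : exists beta, w <> [::] -> is_sig u w beta.
Proof.
case: (classic (w = [::])) => h; first by exists [::].
by have [b hb] := sig_ex u h; exists b.
Qed.

Definition sg u w : seq bool := proj1_sig (constructive_indefinite_description _ (sig_ex' u w)).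

Lemma sg_spec u w : w <> [::] -> is_sig u w (sg u w).
Proof. rewrite /sg; case: constructive_indefinite_description => /= b h; exact: h. Qed.

Lemma sg1 u a : sg u [:: a] = [:: a].
Proof. exact: is_sig_uniq (sg_spec u (@cons_nn _ a [::])) (is_sig1 u a). Qed.

Definition Pw u (w : seq bool) : seq (seq bool) := mkseq (fun k => sg u (take k.+1 w)) (size w).

Lemma size_Pw u w : size (Pw u w) = size w.
Proof. exact: size_mkseq. Qed.

Lemma take_rcons_le (w : seq bool) b k : (k <= size w)%N -> take k (rcons w b) = take k w.
Proof.
move=> hk; rewrite -cats1 take_cat; case: ltnP => h //.
have -> : k = size w by lia.
by rewrite subnn take0 cats0 take_size.
Qed.

Lemma Pw_rcons u w b : Pw u (rcons w b) = rcons (Pw u w) (sg u (rcons w b)).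
Proof.
rewrite /Pw size_rcons mkseqS take_oversize ?size_rcons //.
congr rcons; rewrite /mkseq; apply/eq_in_map => k; rewrite mem_iota add0n => hk.
by rewrite take_rcons_le.
Qed.

Lemma hb_path_from_rcons u v p x : hb_path_from u v (rcons p x) <->
  hb_path_from u v p /\ hb_arrow u (last v p) x.
Proof.
elim: p v => [|w p IH] v /=; first by split; [move=> [h _] | move=> [_ h]].
rewrite IH; tauto.
Qed.

Lemma hb_path_rcons u p x : p <> [::] -> (hb_path u (rcons p x) <->
  hb_path u p /\ hb_arrow u (last [::] p) x).
Proof.
case: p => [//|v p] _ /=; rewrite hb_path_from_rcons; tauto.
Qed.

Lemma last_sg u w : w <> [::] -> last false (sg u w) = last false w.
Proof.
move=> wn; have hs := sg_spec u wn.
have sn := is_sig_nonnil hs.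
case: hs => /suffixP [t e] _ _.
rewrite [in RHS]e last_cat; move: (sg u w) sn => s0.
by case/lastP: s0 => [//|s c] _; rewrite !last_rcons.
Qed.

Lemma feq_sym u v w : feq u v w -> feq u w v.
Proof. by move=> h y; rewrite h. Qed.

Lemma fwd u w : w <> [::] -> occurs u w ->
  hb_path u (Pw u w) /\ last [::] (Pw u w) = sg u w.
Proof.
elim/last_ind: w => [//|w b IH] _ ow.
rewrite Pw_rcons last_rcons; split => //.
case: (eqVneq w [::]) => [e|wn].
- subst w; rewrite /=; split => //.
  by case: (sg_spec u (@rcons_nn _ [::] b)).
- have wn' : w <> [::] by apply/eqP.
  have ow' := occurs_rcons ow.
  have [hp hl] := IH wn' ow'.
  have Pn : Pw u w <> [::] by move=> e; have := size_Pw u w; rewrite e; case: (w) wn'.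
  apply: (proj2 (@hb_path_rcons u _ _ Pn)); split => //; rewrite hl.
  have hsw := sg_spec u wn'.
  split; first by case: hsw.
  exists b; split.
  + apply: occurs_transfer wn' (is_sig_nonnil hsw) _ ow.
    exact: fol_sig ow' hsw _ (suffix_refl _) (size_suffix (let: And3 s _ _ := hsw in s)).
  + exact: sig_step ow hsw (sg_spec u (@rcons_nn _ w b)).
Qed.

Lemma occ1 u : sturmian u -> forall a, occurs u [:: a].
Proof.
move=> hs a; apply: fac_occurs => //.
apply: NNPP => hf.
have [s [us ss hsm]] := sturm_list hs (leqnn 1).
have sub : {subset s <= [:: [:: ~~ a]]}.
  move=> x /hsm [_ [i ei]]; rewrite inE ei /block_at /= addn0.
  have hui : u i != a by apply/eqP => e; apply: hf; exists i; rewrite /block_at /= addn0 e.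
  by move: hui; case: (u i); case: (a).
by have := uniq_leq_size us sub; rewrite ss.
Qed.

Lemma Pw_nil u : Pw u [::] = [::].
Proof. by []. Qed.

Lemma map_last_Pw u w : map (last false) (Pw u w) = w.
Proof.
elim/last_ind: w => [//|w b IH].
by rewrite Pw_rcons map_rcons IH last_sg ?last_rcons //; apply: rcons_nn.
Qed.

Lemma bwd u : sturmian u -> forall p, p <> [::] -> hb_path u p ->
  size (head [::] p) = 1%N -> exists w, occurs u w /\ p = Pw u w.
Proof.
move=> hs; elim/last_ind => [//|p x IH] _.
case: (eqVneq p [::]) => [e|pn].
- subst p => /= _; case: x => [|a [|]] //= _.
  by exists [:: a]; split; [exact: occ1 | rewrite /Pw /= sg1].
- have pn' : p <> [::] by apply/eqP.
  move/(@hb_path_rcons u _ x pn') => [hp [_ [b [ob hsx]]]] hh.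
  have hh' : size (head [::] p) = 1%N by case: (p) pn' hh.
  have [w' [ow' ep]] := IH pn' hp hh'.
  have wn : w' <> [::] by move=> e; apply: pn'; rewrite ep e.
  have [_ hl] := fwd wn ow'.
  rewrite ep hl in ob hsx.
  have hsw := sg_spec u wn.
  have fe : feq u (sg u w') w'.
    apply: feq_sym; exact: fol_sig ow' hsw _ (suffix_refl _) (size_suffix (let: And3 s _ _ := hsw in s)).
  have ow : occurs u (rcons w' b) := occurs_transfer (is_sig_nonnil hsw) wn fe ob.
  exists (rcons w' b); split => //.
  rewrite Pw_rcons -ep; congr rcons.
  exact: is_sig_uniq hsx (sig_step ow hsw (sg_spec u (@rcons_nn _ w' b))).
Qed.

Local Close Scope ring_scope.

Theorem theorem5p10 (u : nat -> bool) :
  sturmian u ->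
  forall n : nat, (1 <= n)%N ->
    has_card (fun p : seq (seq bool) =>
      [/\ hb_path u p, size p = n & head [::] p \in [:: [:: false]; [:: true]]])
      n.+1.
Proof.
move=> hs n hn.
have [s [us ss hsm]] := sturm_list hs hn.
exists (map (Pw u) s); split.
- rewrite map_inj_in_uniq // => w1 w2 _ _ e.
  by rewrite -(map_last_Pw u w1) e map_last_Pw.
- by rewrite size_map.
- move=> p; split.
  + move=> /mapP [w /hsm [sw [i ei]] ->].
    have wn : w <> [::] by move=> e; rewrite e in sw; rewrite -sw in hn.
    have ow : occurs u w by apply: fac_occurs => //; exists i; rewrite sw.
    split; first exact: (fwd wn ow).1.
    * by rewrite size_Pw.
    * case: (w) wn => [//|a w'] _.
      by rewrite /Pw /= take0 sg1; case: (a).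
  + case=> hp sp hh.
    have pn : p <> [::] by move=> e; rewrite e in sp; rewrite -sp in hn.
    have hh' : size (head [::] p) = 1%N by move: hh; rewrite !inE => /orP [] /eqP ->.
    have [w [ow ep]] := bwd hs pn hp hh'.
    apply/mapP; exists w => //; apply/hsm; split.
    * by rewrite -sp ep size_Pw.
    * have [i ei] := occurs_fac ow; exists i; rewrite -(size_Pw u w) -ep sp in ei; exact: ei.
Qed.
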